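(* Let $G$ be a finite group with subgroups $H$ and $K$, and let $\Omega_K$ be a left transversal of the normalizer $N_G(K)$ in $G$. Then the number of double cosets $HgK$ is $$|H\backslash G/K|=\sum_{l\in\Omega_K}\frac{[N_G(K):K]\cdot|lKl^{-1}\cap H|}{|H|}.$$
   Context: A left transversal of a subgroup is a set of representatives of its left cosets in $G$. *)

(* Defs.v *)
From mathcomp Require Import all_boot all_algebra all_fingroup.
Set Implicit Arguments. Unset Strict Implicit. Unset Printing Implicit Defensive.
Import GRing.Theory.

Open Scope group_scope.

Definition double_cosets (gT : finGroupType) (H K G : {set gT}) : {set {set gT}} :=
  [set (H :* g) * K | g in G].

Definition left_transversal (gT : finGroupType) (Omega N G : {set gT}) : Prop :=
  is_transversal Omega (lcosets N G) G.

(* Main.v *)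
Require Import Defs.
From mathcomp Require Import all_boot all_algebra all_fingroup.
Import GRing.Theory.

Lemma dc_rcoset {gT : finGroupType} {H K : {group gT}} {g} :
  H :* g * K = (H * K :^ g^-1) :* g.
Proof.
rewrite conjsgE invgK !mulgA -(mulgA _ [set g^-1]) mulg_set1 mulVg.
by rewrite -set1gE mulg1.
Qed.

Lemma card_dc {gT : finGroupType} {H K : {group gT}} {g} :
  (#|(H :* g * K)%g| * #|K :^ g^-1 :&: H| = #|H| * #|K|)%N.
Proof.
by rewrite dc_rcoset card_rcoset setIC -(cardJg K g^-1) mul_cardG.
Qed.

Lemma dc_eq {gT : finGroupType} {H K : {group gT}} {g g0} :
  g \in H :* g0 * K -> H :* g * K = H :* g0 * K.
Proof.
case/mulsgP=> x k /mulsgP[h y Hh /set1P -> ->] Kk ->.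
rewrite -!mulg_set1 !mulgA rcoset_id // -!mulgA; congr (_ * _).
by rewrite lcoset_id.
Qed.

Lemma dc_refl {gT : finGroupType} {H K : {group gT}} {g} : g \in H :* g * K.
Proof.
apply/mulsgP; exists g 1; rewrite ?mulg1 //.
by apply/mulsgP; exists 1 g; rewrite ?mul1g ?set11.
Qed.

Lemma step1 (gT : finGroupType) (G H K : {group gT})
  (sHG : H \subset G) (sKG : K \subset G) :
  (\sum_(g in G) #|K :^ g^-1 :&: H| = #|double_cosets H K G| * (#|H| * #|K|))%N.
Proof.
rewrite (partition_big_imset (fun g => H :* g * K)) -/(double_cosets H K G).
rewrite -sum_nat_const; apply: eq_bigr => D /imsetP[g0 Gg0 ->].
have sD : H :* g0 * K \subset G.
  apply/subsetP => x /mulsgP[y k /mulsgP[h z Hh /set1P -> ->] Kk ->].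
  by rewrite !groupM // ?(subsetP sHG _ Hh) ?(subsetP sKG _ Kk).
rewrite (eq_bigl (mem (H :* g0 * K))); last first.
  move=> g /=; apply/andP/idP => [[_ /eqP <-] | Dg].
    exact: dc_refl.
  by split; [exact: (subsetP sD) | rewrite (dc_eq Dg)].
have pD : (0 < #|(H :* g0 * K)%g|)%N.
  by apply/card_gt0P; exists g0; apply: dc_refl.
rewrite (eq_bigr (fun _ => #|K :^ g0^-1 :&: H|)); first by rewrite sum_nat_const card_dc.
move=> g Dg; apply/eqP; rewrite -(eqn_pmul2l pD) card_dc -{1}(dc_eq Dg) card_dc.
by [].
Qed.

Lemma step2 (gT : finGroupType) (G H K : {group gT}) (Omega : {set gT})
  (hOmega : left_transversal Omega 'N_G(K) G) :
  (\sum_(g in G) #|K :^ g^-1 :&: H| =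
   \sum_(l in Omega) #|'N_G(K)| * #|K :^ l^-1 :&: H|)%N.
Proof.
set N := 'N_G(K).
have trX := hOmega; case/and3P: hOmega => /andP[/eqP coverP /andP[tiP _]] sXG _.
have imP : (fun g => g *: N) @: G = lcosets N G.
  by apply: eq_imset => g; rewrite lcosetE.
rewrite (partition_big_imset (fun g => g *: N)) imP -(pblock_transversal trX).
rewrite big_imset; last exact: pblock_inj trX.
apply: eq_bigr => l Xl.
have Gl : l \in G := subsetP sXG l Xl.
have PlN : l *: N \in lcosets N G by apply/lcosetsP; exists l.
rewrite (def_pblock tiP PlN (lcoset_refl _ _)).
rewrite (eq_bigl (mem (l *: N))); last first.
  move=> g /=; apply/andP/idP => [[_ /eqP <-] | Dg]; first exact: lcoset_refl.
  split; last by apply/eqP/lcoset_eqP.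
  case/lcosetP: Dg => n Nn ->; rewrite groupM //.
  by case/setIP: Nn.
rewrite -(card_lcoset N l) -sum_nat_const; apply: eq_bigr => g /lcosetP[n Nn ->].
case/setIP: Nn => _ nKn.
rewrite invMg conjsgM.
have nKn' : n^-1 \in 'N(K) by rewrite groupV.
by rewrite (normP nKn').
Qed.

Theorem lemma3p3 (gT : finGroupType) (G H K : {group gT}) (Omega : {set gT})
  (sHG : H \subset G) (sKG : K \subset G)
  (hOmega : left_transversal Omega 'N_G(K) G) :
  (#|double_cosets H K G|%:R : rat) =
  (\sum_(l in Omega)
     ((#|'N_G(K) : K|%:R * #|(K :^ l^-1) :&: H|%:R) / #|H|%:R))%R.
Proof.
have sKN : K \subset 'N_G(K) by rewrite subsetI sKG normG.
have E := step1 _ _ _ _ sHG sKG; rewrite (step2 _ _ H _ _ hOmega) in E.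
have E2 : (#|double_cosets H K G| * #|H| =
           \sum_(l in Omega) #|'N_G(K) : K| * #|K :^ l^-1 :&: H|)%N.
  apply/eqP; rewrite -(eqn_pmul2l (cardG_gt0 K)) big_distrr /=.
  rewrite mulnCA (mulnC #|K|) -E; apply/eqP/eq_bigr => l _.
  by rewrite mulnA (Lagrange sKN).
rewrite -mulr_suml.
rewrite (eq_bigr (fun l => ((#|'N_G(K) : K| * #|K :^ l^-1 :&: H|)%N%:R)%R)); last first.
  by move=> l _; rewrite natrM.
by rewrite -natr_sum -E2 natrM mulfK // Num.Theory.pnatr_eq0 -lt0n cardG_gt0.
Qed.
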